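(* Let $\mathcal{X}$ be a nonempty finite set and $k:\mathcal{X}\times\mathcal{X}\to\mathbb{R}_{\ge 0}$. Then $k$ is a strong kernel if and only if $k$ is induced by some hierarchy on $\mathcal{X}$.
   Context: A rooted tree is a finite tree $T$ with a distinguished root vertex $r$. For a vertex $v$, its parent $p(v)$ is the vertex following $v$ on the unique path from $v$ to $r$, with the convention $p(r)=r$. The ancestors of $v$ are the vertices on the path from $v$ to $r$ (including $v$ and $r$); the depth of $v$ is the number of edges on this path. The lowest common ancestor $\mathrm{LCA}(u,v)$ is the unique vertex of maximum depth that is an ancestor of both $u$ and $v$. A hierarchy on a set $\mathcal{X}$ is a pair $(T,w)$ where $T$ is a rooted tree whose set of leaves is exactly $\mathcal{X}$, and $w:V(T)\to\mathbb{R}_{\ge 0}$ satisfies $w(v)\ge w(p(v))$ for all $v\in V(T)$. The kernel induced by $(T,w)$ is $k(x,y)=w(\mathrm{LCA}(x,y))$ for $x,y\in\mathcal{X}$. A strong kernel on a set $\mathcal{X}$ is a symmetric function $k:\mathcal{X}\times\mathcal{X}\to\mathbb{R}_{\ge 0}$ such that $k(x,y)\ge\min\{k(x,z),k(z,y)\}$ for all $x,y,z\in\mathcal{X}$. *)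

(* Defs.v *)
From HB Require Import structures.
From mathcomp Require Import all_boot all_order all_algebra.
Set Implicit Arguments. Unset Strict Implicit. Unset Printing Implicit Defensive.
Import Order.TTheory GRing.Theory Num.Theory.
Local Open Scope ring_scope.

(* A rooted tree on a finite vertex type V is given by a parent map p and a
   root r with p r = r, such that every vertex reaches r by iterating p.
   (This forces acyclicity: the only vertex fixed by p is r.) *)
Definition rooted_tree (V : finType) (p : V -> V) (r : V) : Prop :=
  p r = r /\ forall v : V, exists n : nat, iter n p v = r.

Definition ancestor (V : finType) (p : V -> V) (a v : V) : Prop :=
  exists n : nat, iter n p v = a.

Definition depth_is (V : finType) (p : V -> V) (r v : V) (d : nat) : Prop :=
  iter d p v = r /\ forall m : nat, (m < d)%N -> iter m p v <> r.

Definition is_lca (V : finType) (p : V -> V) (r u v a : V) : Prop :=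
  ancestor p a u /\ ancestor p a v /\
  exists da : nat, depth_is p r a da /\
    forall b db, ancestor p b u -> ancestor p b v -> depth_is p r b db ->
      (db <= da)%N.

Definition is_leaf (V : finType) (p : V -> V) (v : V) : Prop :=
  forall u : V, u <> v -> p u <> v.

Definition induced_by_hierarchy (R : realFieldType) (X : finType)
    (k : X -> X -> R) : Prop :=
  exists (V : finType) (p : V -> V) (r : V) (leaf : X -> V) (w : V -> R),
    [/\ rooted_tree p r,
        injective leaf,
        (forall v : V, is_leaf p v <-> exists x : X, leaf x = v),
        (forall v : V, 0 <= w v /\ w (p v) <= w v)
      & forall (x y : X) (a : V), is_lca p r (leaf x) (leaf y) a ->
          k x y = w a].

Definition strong_kernel (R : realFieldType) (X : finType)
    (k : X -> X -> R) : Prop :=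
  (forall x y, k x y = k y x) /\ (forall x y, 0 <= k x y) /\
  (forall x y z, Num.min (k x z) (k z y) <= k x y).

(* Main.v *)
Require Import Defs.
From HB Require Import structures.
From mathcomp Require Import all_boot all_order all_algebra.
From mathcomp Require Import zify.
From Stdlib Require Import Classical.
Import Order.TTheory GRing.Theory Num.Theory.
Set Implicit Arguments. Unset Strict Implicit. Unset Printing Implicit Defensive.

Lemma bounded_max (P : nat -> Prop) (B : nat) :
  P 0%N -> (forall n, P n -> (n <= B)%N) ->
  exists n, P n /\ forall m, P m -> (m <= n)%N.
Proof.
elim: B => [|B IH] P0 HB.
  by exists 0%N; split => // m /HB; rewrite leqn0 => /eqP ->.
case: (classic (P B.+1)) => HP.
  by exists B.+1; split => // m /HB.
apply: IH => // n Pn; have := HB n Pn; rewrite leq_eqVlt => /orP[/eqP En|//].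
by subst n.
Qed.


Lemma iter_r (V : finType) (p : V -> V) r n : p r = r -> iter n p r = r.
Proof. by move=> h; apply: iter_fix. Qed.

Lemma depth_ex (V : finType) (p : V -> V) r v :
  rooted_tree p r -> exists d, depth_is p r v d.
Proof.
move=> [hr hre]; have ex : exists n, iter n p v == r.
  by have [n hn] := hre v; exists n; apply/eqP.
case: (ex_minnP ex) => d /eqP hd hmin; exists d; split => // m hm /eqP hm'.
by have := hmin _ hm'; rewrite leqNgt hm.
Qed.

Lemma depth_uniq (V : finType) (p : V -> V) r v d d' :
  depth_is p r v d -> depth_is p r v d' -> d = d'.
Proof.
move=> [h1 h2] [h3 h4]; case: (ltngtP d d') => // H.
- by case: (h4 _ H).
- by case: (h2 _ H).
Qed.

Lemma depth_iter (V : finType) (p : V -> V) r v d n :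
  p r = r -> depth_is p r v d -> depth_is p r (iter n p v) (d - n).
Proof.
move=> hr [h1 h2]; split.
  rewrite -iterD; case: (leqP n d) => H.
    by rewrite subnK.
  have -> : (d - n + n = (n - d) + d)%N by lia.
  by rewrite iterD h1 iter_r.
move=> m hm; rewrite -iterD; apply: h2; lia.
Qed.

Lemma anc_trans (V : finType) (p : V -> V) a b c :
  ancestor p a b -> ancestor p b c -> ancestor p a c.
Proof. by move=> [i <-] [j <-]; exists (i + j)%N; rewrite iterD. Qed.

Lemma anc_r (V : finType) (p : V -> V) r v :
  rooted_tree p r -> ancestor p r v.
Proof. by move=> [_ h]; apply: h. Qed.

Lemma depth0 (V : finType) (p : V -> V) r a : depth_is p r a 0 -> a = r.
Proof. by case. Qed.

Lemma anc_le (V : finType) (p : V -> V) r v a b da db :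
  rooted_tree p r -> ancestor p a v -> ancestor p b v ->
  depth_is p r a da -> depth_is p r b db -> (da <= db)%N -> ancestor p a b.
Proof.
move=> hT [i ha] [j hb] Da Db hle; have hr := hT.1.
have [dv Dv] := depth_ex v hT.
have Ea : da = (dv - i)%N by apply: depth_uniq Da _; rewrite -ha; exact: depth_iter.
have Eb : db = (dv - j)%N by apply: depth_uniq Db _; rewrite -hb; exact: depth_iter.
case: (leqP j i) => H.
  exists (i - j)%N; rewrite -ha -hb -iterD subnK //.
have E : da = 0%N by lia.
rewrite E in Da; rewrite (depth0 Da); exact: anc_r.
Qed.

Lemma anc_depth_le (V : finType) (p : V -> V) r b u db du :
  p r = r -> ancestor p b u -> depth_is p r b db -> depth_is p r u du -> (db <= du)%N.
Proof.
move=> hr [n hn] Db Du.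
have : db = (du - n)%N by apply: depth_uniq Db _; rewrite -hn; exact: depth_iter.
lia.
Qed.

Lemma w_anc (V : finType) (p : V -> V) (R : realFieldType) (w : V -> R) a b :
  (forall v, w (p v) <= w v)%R -> ancestor p a b -> (w a <= w b)%R.
Proof.
move=> hw [n <-]; elim: n => [|n IH] //=.
exact: le_trans (hw _) IH.
Qed.

Lemma lca_ex (V : finType) (p : V -> V) r u v :
  rooted_tree p r -> exists a, is_lca p r u v a.
Proof.
move=> hT; have hr := hT.1.
have [du Du] := depth_ex u hT.
pose P n := exists b, [/\ ancestor p b u, ancestor p b v & depth_is p r b n].
have P0 : P 0%N.
  exists r; split; try exact: anc_r; split => // m; by rewrite ltn0.
have PB : forall n, P n -> (n <= du)%N.
  by move=> n [b [h1 h2 h3]]; apply: anc_depth_le h1 h3 Du.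
have [n [[b [h1 h2 h3]] hmax]] := bounded_max P0 PB.
exists b; split => //; split => //; exists n; split => // b' db hb1 hb2 hb3.
by apply: hmax; exists b'.
Qed.

Lemma lca_sym (V : finType) (p : V -> V) r u v a :
  is_lca p r u v a -> is_lca p r v u a.
Proof.
move=> [h1 [h2 [da [h3 h4]]]]; split; first exact: h2.
split; first exact: h1.
exists da; split; first exact: h3.
by move=> b db hb1 hb2 hb3; apply: (h4 b db hb2 hb1 hb3).
Qed.

Lemma dir1 (R : realFieldType) (X : finType) (k : X -> X -> R)
  (hk : forall x y : X, (0 <= k x y)%R) :
  induced_by_hierarchy k -> strong_kernel k.
Proof.
move=> [V [p [r [leaf [w [hT hinj hleaf hw hkw]]]]]].
have hr := hT.1.
have hw' : forall v, (w (p v) <= w v)%R by move=> v; case: (hw v).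
split; last split => //.
  move=> x y; have [a ha] := lca_ex (leaf x) (leaf y) hT.
  by rewrite (hkw _ _ _ ha) (hkw _ _ _ (lca_sym ha)).
move=> x y z.
have [a ha] := lca_ex (leaf x) (leaf y) hT.
have [b hb] := lca_ex (leaf x) (leaf z) hT.
have [c hc] := lca_ex (leaf z) (leaf y) hT.
rewrite (hkw _ _ _ ha) (hkw _ _ _ hb) (hkw _ _ _ hc).
move: ha hb hc => [a1 [a2 [da [Da amax]]]] [b1 [b2 [db [Db bmax]]]]
  [c1 [c2 [dc [Dc cmax]]]].
rewrite ge_min; apply/orP.
case: (leqP db da) => H1.
  left; apply: w_anc hw' _; exact: anc_le hT b1 a1 Db Da H1.
have aB : ancestor p a b by apply: anc_le hT a1 b1 Da Db (ltnW H1).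
have aZ := anc_trans aB b2.
have H2 : (da <= dc)%N by apply: cmax aZ a2 Da.
case: (leqP dc db) => H3.
  have cB := anc_le hT c1 b2 Dc Db H3.
  have cX := anc_trans cB b1.
  have H4 : (dc <= da)%N by apply: amax cX c2 Dc.
  right; apply: w_anc hw' _; exact: anc_le hT c2 a2 Dc Da H4.
have bC := anc_le hT b2 c1 Db Dc (ltnW H3).
have bY := anc_trans bC c2.
have := amax _ _ b1 bY Db; lia.
Qed.

Definition vals (R : realFieldType) (X : finType) (k : X -> X -> R) : seq R :=
  sort <=%R (undup [seq k u v | u <- enum X, v <- enum X]).
Definition tv (R : realFieldType) (X : finType) (k : X -> X -> R) (j : nat) : R :=
  nth 0%R (vals k) j.
Definition Cset (R : realFieldType) (X : finType) (k : X -> X -> R) (j : nat) (x : X)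
  : {set X} := [set y | (tv k j <= k x y)%R].
Definition NN (X : finType) := (#|X| * #|X|)%N.
Definition validc (R : realFieldType) (X : finType) (k : X -> X -> R)
  (c : 'I_(NN X).+1 * {set X}) : bool :=
  (c.1 < size (vals k))%N &&
  [exists x, (tv k c.1 <= k x x)%R && (c.2 == Cset k c.1 x)].
Definition Vc (R : realFieldType) (X : finType) (k : X -> X -> R) :=
  {c : 'I_(NN X).+1 * {set X} | validc k c}.


Section D2.
Variables (R : realFieldType) (X : finType) (k : X -> X -> R) (x0 : X).
Hypothesis hk : forall x y, (0 <= k x y)%R.
Hypothesis hsk : strong_kernel k.
Local Open Scope ring_scope.

Local Notation m := (size (vals k)).
Local Notation t := (tv k).

Lemma ksym x y : k x y = k y x.
Proof. by case: hsk. Qed.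

Lemma kult s x y z : s <= k x z -> s <= k z y -> s <= k x y.
Proof.
move=> h1 h2; case: hsk => _ [_ h]; apply: le_trans (h x y z).
by rewrite le_min h1 h2.
Qed.

Lemma kdiag x y : k x y <= k x x.
Proof. by apply: (@kult (k x y) x x y) => //; rewrite ksym. Qed.

Lemma vals_lt : sorted <%R (vals k).
Proof.
rewrite lt_sorted_uniq_le sort_uniq undup_uniq /=.
apply: sort_sorted; exact: le_total.
Qed.

Lemma mem_vals u v : k u v \in vals k.
Proof.
by rewrite mem_sort mem_undup; apply/allpairsP; exists (u, v); rewrite !mem_enum.
Qed.

Lemma size_vals_le : (m <= (NN X).+1)%N.
Proof.
rewrite size_sort; apply: leq_trans (size_undup _) _.
by rewrite size_allpairs -cardE /NN.
Qed.

Lemma m_gt0 : (0 < m)%N.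
Proof. by apply: (@leq_trans (index (k x0 x0) (vals k)).+1) => //; rewrite index_mem mem_vals. Qed.

Lemma tv_mono i j : (i < m)%N -> (j < m)%N -> (t i <= t j) = (i <= j)%N.
Proof. by move=> hi hj; apply: (lt_sorted_leq_nth 0 vals_lt). Qed.

Lemma tv_index u v : t (index (k u v) (vals k)) = k u v.
Proof. by rewrite /tv nth_index // mem_vals. Qed.

Lemma index_lt u v : (index (k u v) (vals k) < m)%N.
Proof. by rewrite index_mem mem_vals. Qed.

Lemma tv_ge0 j : (j < m)%N -> 0 <= t j.
Proof.
move=> hj; have : t j \in vals k by rewrite /tv mem_nth.
rewrite mem_sort mem_undup => /allpairsP [[u v] [_ _ ->]]; exact: hk.
Qed.

Lemma tv0_le u v : t 0 <= k u v.
Proof.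
rewrite -tv_index tv_mono //; [exact: m_gt0 | exact: index_lt].
Qed.

Lemma Cset_eq j x y : t j <= k x y -> Cset k j x = Cset k j y.
Proof.
move=> h; apply/setP => z; rewrite !inE; apply/idP/idP => hz.
- by apply: (kult (z := x)) => //; rewrite ksym.
- exact: (kult h).
Qed.

Lemma Cset0 x : Cset k 0 x = setT.
Proof. by apply/setP => z; rewrite !inE tv0_le. Qed.

Lemma rc_valid : validc k (ord0, setT).
Proof.
rewrite /validc /= m_gt0 /=; apply/existsP; exists x0.
by rewrite tv0_le Cset0 eqxx.
Qed.

Definition rc : Vc k := exist _ (ord0, setT) rc_valid.

Definition clus (j : nat) (x : X) : Vc k := insubd rc (inord j, Cset k j x).

Lemma valid_clus j x : (j < m)%N -> t j <= k x x ->
  validc k (inord j, Cset k j x).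
Proof.
move=> hj hx; have hjN : (j < (NN X).+1)%N by apply: leq_trans hj size_vals_le.
rewrite /validc /= inordK // hj /=; apply/existsP; exists x; by rewrite hx eqxx.
Qed.

Lemma val_clus j x : (j < m)%N -> t j <= k x x ->
  val (clus j x) = (inord j, Cset k j x).
Proof. by move=> hj hx; rewrite /clus insubdK //; exact: valid_clus. Qed.

Definition lev (c : Vc k) : nat := (val c).1.

Lemma lev_clus j x : (j < m)%N -> t j <= k x x -> lev (clus j x) = j.
Proof.
move=> hj hx; rewrite /lev val_clus //= inordK //.
by apply: leq_trans hj size_vals_le.
Qed.

Lemma clus_eq j x y : t j <= k x y -> clus j x = clus j y.
Proof. by move=> h; rewrite /clus (Cset_eq h). Qed.

Lemma clus_eq_inv j x y : (j < m)%N -> t j <= k x x -> t j <= k y y ->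
  clus j x = clus j y -> t j <= k x y.
Proof.
move=> hj hx hy E; have := congr1 val E; rewrite !val_clus // => -[] /setP /(_ y).
by rewrite !inE hy => ->.
Qed.

Lemma rc_clus x : rc = clus 0 x.
Proof.
apply: val_inj; rewrite val_clus ?m_gt0 ?tv0_le //= Cset0.
by congr pair; apply: val_inj; rewrite /= inordK.
Qed.

Lemma lev_rc : lev rc = 0%N.
Proof. by []. Qed.

Lemma clus_surj (c : Vc k) : exists j x,
  [/\ (j < m)%N, t j <= k x x & c = clus j x].
Proof.
case: c => [[j S] hv]; have hv' := hv; rewrite /validc /= in hv'.
case/andP: hv' => hj /existsP [x /andP [hx hS]].
exists j, x; split => //; apply: val_inj; rewrite val_clus //= (eqP hS).
by congr pair; apply: val_inj; rewrite /= inordK.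
Qed.

Definition jx (x : X) : nat := index (k x x) (vals k).

Definition V := (X + Vc k)%type.

Definition par (v : V) : V :=
  match v with
  | inl x => inr (clus (jx x) x)
  | inr c => inr (clus (lev c).-1 (odflt x0 [pick y in (val c).2]))
  end.

Definition wt (v : V) : R :=
  match v with
  | inl x => k x x
  | inr c => t (lev c)
  end.

Definition rt : V := inr rc.

Lemma par_clus j x : (j < m)%N -> t j <= k x x ->
  par (inr (clus j x)) = inr (clus j.-1 x).
Proof.
move=> hj hx /=; rewrite lev_clus // val_clus //=.
case: pickP => [y hy|]; last by move=> /(_ x); rewrite inE hx.
rewrite inE in hy; congr inr; apply: clus_eq => /=; rewrite ksym; apply: le_trans _ hy.
rewrite tv_mono //; [exact: leq_pred | exact: leq_ltn_trans (leq_pred j) hj].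
Qed.

Lemma iter_clus j x n : (j < m)%N -> t j <= k x x ->
  iter n par (inr (clus j x)) = inr (clus (j - n) x).
Proof.
move=> hj hx; elim: n => [|n IH]; first by rewrite subn0.
rewrite iterS IH par_clus.
- by rewrite subnS.
- exact: leq_ltn_trans (leq_subr _ _) hj.
- apply: le_trans hx; rewrite tv_mono //; last exact: leq_ltn_trans (leq_subr _ _) hj.
  exact: leq_subr.
Qed.

Lemma jx_lt x : (jx x < m)%N.
Proof. exact: index_lt. Qed.

Lemma tv_jx x : t (jx x) = k x x.
Proof. exact: tv_index. Qed.

Lemma tv_le_jx i x : (i <= jx x)%N -> t i <= k x x.
Proof.
move=> h; rewrite -tv_jx tv_mono //; [exact: leq_ltn_trans h (jx_lt x)|exact: jx_lt].
Qed.

Lemma iter_leaf x n :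
  iter n.+1 par (inl x) = inr (clus (jx x - n) x).
Proof. by rewrite iterSr /= iter_clus // ?jx_lt ?tv_le_jx. Qed.


Lemma rt_clus x : rt = inr (clus 0 x).
Proof. by rewrite /rt (rc_clus x). Qed.

Lemma par_rt : par rt = rt.
Proof. by rewrite (rt_clus x0) par_clus ?m_gt0 ?tv0_le. Qed.

Lemma rooted : rooted_tree par rt.
Proof.
split; first exact: par_rt.
case => [x|c].
  by exists (jx x).+1; rewrite iter_leaf subnn -rt_clus.
have [j [x [hj hx ->]]] := clus_surj c.
by exists j; rewrite iter_clus // subnn -rt_clus.
Qed.

Lemma depth_clus j x : (j < m)%N -> t j <= k x x ->
  depth_is par rt (inr (clus j x)) j.
Proof.
move=> hj hx; split; first by rewrite iter_clus // subnn -rt_clus.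
move=> n hn; rewrite iter_clus // => -[] /(congr1 lev).
rewrite lev_rc lev_clus; first by lia.
- exact: leq_ltn_trans (leq_subr _ _) hj.
- apply: le_trans hx; rewrite tv_mono //; last exact: leq_ltn_trans (leq_subr _ _) hj.
  exact: leq_subr.
Qed.

Lemma depth_leaf x : depth_is par rt (inl x) (jx x).+1.
Proof.
split; first by rewrite iter_leaf subnn -rt_clus.
case => [|n] hn //; rewrite iter_leaf => -[] /(congr1 lev).
rewrite lev_rc lev_clus; first by lia.
- exact: leq_ltn_trans (leq_subr _ _) (jx_lt x).
- by apply: tv_le_jx; exact: leq_subr.
Qed.

Lemma anc_leaf a x : ancestor par a (inl x) ->
  a = inl x \/ exists i, (i <= jx x)%N /\ a = inr (clus i x).
Proof.
case => -[|n] <-; first by left.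
by right; exists (jx x - n)%N; rewrite iter_leaf; split => //; exact: leq_subr.
Qed.

Lemma anc_leaf_clus i x : (i <= jx x)%N -> ancestor par (inr (clus i x)) (inl x).
Proof.
by move=> h; exists (jx x - i).+1; rewrite iter_leaf; congr (inr (clus _ _)); lia.
Qed.

Lemma vals_uniq : uniq (vals k).
Proof. by rewrite sort_uniq undup_uniq. Qed.

Lemma leaves (v : V) : is_leaf par v <-> exists x, inl x = v.
Proof.
split; last first.
  by move=> [x <-] [u|u] _.
case: v => [x|c] hl; first by exists x.
exfalso; have [j [x [hj hx Ec]]] := clus_surj c; subst c.
case: (eqVneq (t j) (k x x)) => E.
  apply: (hl (inl x)) => //=; congr (inr (clus _ _)).
  by rewrite /jx -E index_uniq // vals_uniq.
have hlt : (j < jx x)%N.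
  rewrite ltnNge; apply/negP => H.
  have : k x x <= t j by rewrite -tv_jx tv_mono // jx_lt.
  by move=> H2; move/negP: E; apply; rewrite eq_le hx H2.
have hj1 : (j.+1 < m)%N by apply: leq_ltn_trans hlt (jx_lt x).
have hx1 : t j.+1 <= k x x by apply: tv_le_jx.
apply: (hl (inr (clus j.+1 x))).
  by move=> -[] /(congr1 lev); rewrite !lev_clus //; lia.
by rewrite par_clus.
Qed.

Lemma wt_props (v : V) : 0 <= wt v /\ wt (par v) <= wt v.
Proof.
case: v => [x|c].
  by split; [exact: hk | rewrite /= lev_clus ?jx_lt ?tv_le_jx // tv_jx].
have [j [x [hj hx ->]]] := clus_surj c.
rewrite par_clus //= !lev_clus //.
- split; first exact: tv_ge0.
  rewrite tv_mono //; [exact: leq_pred | exact: leq_ltn_trans (leq_pred j) hj].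
- exact: leq_ltn_trans (leq_pred j) hj.
- apply: le_trans hx; rewrite tv_mono //; [exact: leq_pred | exact: leq_ltn_trans (leq_pred j) hj].
Qed.

Lemma lca_val x y a : is_lca par rt (inl x) (inl y) a -> k x y = wt a.
Proof.
move=> [ax [ay [da [Da hmax]]]].
case: (eqVneq x y) => [exy|nxy].
  subst y.
  case: (anc_leaf ax) => [->|[i [hi Ea]]] //.
  subst a; have Ei := depth_uniq Da (depth_clus (leq_ltn_trans hi (jx_lt x)) (tv_le_jx hi)).
  have : ((jx x).+1 <= da)%N.
    by apply: (hmax (inl x) (jx x).+1 _ _ (depth_leaf x)); exists 0%N.
  lia.
case: (anc_leaf ax) => [Ea|[i [hi Ea]]].
  by subst a; case: (anc_leaf ay) => [[]|[i [_ []]]] //; move/eqP: nxy.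
case: (anc_leaf ay) => [Ea'|[i' [hi' Ea']]]; first by rewrite Ea in Ea'.
rewrite Ea in Ea'; case: Ea' => Ec.
have hiv := leq_ltn_trans hi (jx_lt x); have hi'v := leq_ltn_trans hi' (jx_lt y).
have hix := tv_le_jx hi; have hiy := tv_le_jx hi'.
have Eii : i = i' by have := congr1 lev Ec; rewrite !lev_clus.
subst i'.
have hti : t i <= k x y by apply: clus_eq_inv Ec.
pose l := index (k x y) (vals k).
have htl : t l = k x y by apply: tv_index.
have hl : (l < m)%N by apply: index_lt.
have hlx : (l <= jx x)%N by rewrite -tv_mono ?jx_lt // htl tv_jx kdiag.
have hly : (l <= jx y)%N by rewrite -tv_mono ?jx_lt // htl tv_jx ksym kdiag.
have Ecl : clus l x = clus l y by apply: clus_eq; rewrite htl.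
have hld : (l <= da)%N.
  apply: (hmax (inr (clus l x)) l (anc_leaf_clus hlx)).
  - rewrite Ecl; exact: anc_leaf_clus.
  - apply: depth_clus => //; exact: tv_le_jx.
have Eda : da = i by apply: depth_uniq Da _; rewrite Ea; exact: depth_clus.
subst da.
have : (i <= l)%N by rewrite -tv_mono // htl.
move=> hil; have Eil : i = l by apply/eqP; rewrite eqn_leq hil hld.
by rewrite Ea /= lev_clus // Eil htl.
Qed.

Lemma dir2 : induced_by_hierarchy k.
Proof.
exists (X + Vc k)%type, par, rt, inl, wt; split.
- exact: rooted.
- by move=> a b [].
- exact: leaves.
- exact: wt_props.
- exact: lca_val.
Qed.

End D2.

Unset Implicit Arguments.
Local Open Scope ring_scope.

Theorem theorem1 (R : realFieldType) (X : finType) (hX : (0 < #|X|)%N)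
    (k : X -> X -> R) (hk : forall x y : X, 0 <= k x y) :
  strong_kernel k <-> induced_by_hierarchy k.
Proof.
split; last exact: dir1.
case/card_gt0P: hX => x0 _ hs; exact: (dir2 x0 hk hs).
Qed.
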